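(* Let $\kappa\geqslant12$ be even, $a(n)$ the Fourier coefficients of a holomorphic cusp form of weight $\kappa$ for $SL_2(\mathbb{Z})$, let $T\geqslant10$ and $y=T^{3/4}$. For positive integers $n,m,k,\ell$ set $g(n,m,k,\ell)=\dfrac{a(n)a(m)a(k)a(\ell)}{(nmk\ell)^{\kappa/2+1/4}}$ if $n,m,k,\ell\leqslant y$ and $g(n,m,k,\ell)=0$ otherwise. Define \[ S_4(x)=\frac18\sum_{n,m,k,\ell\leqslant y} g(n,m,k,\ell)\,x^{2\kappa-1}\cos\big(4\pi(\sqrt n+\sqrt m+\sqrt k+\sqrt\ell)\sqrt x-\pi\big). \] Then for every $\varepsilon>0$, \[ \int_T^{2T}S_4(x)\,\mathrm{d}x\ll T^{2\kappa-1/2+\varepsilon}y^{1/2}= T^{2\kappa-1/8+\varepsilon}, \] with the implied constant depending on $\varepsilon$ and the cusp form.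
   Context: Sums are over positive integers $n,m,k,\ell$. The coefficients $a(n)$ are real and satisfy Deligne's bound $a(n)\ll n^{(\kappa-1)/2}d(n)$, where $d(n)$ is the number of divisors of $n$. *)

(* Defs.v *)
From Stdlib Require Import Reals Lra Lia ZArith Arith List.
Open Scope R_scope.

Definition ndiv (n : nat) : nat :=
  length (filter (fun k => Nat.eqb (n mod k) 0) (seq 1 n)).

Definition sum_le (y : R) (f : nat -> R) : R :=
  fold_right Rplus 0
    (map (fun n => if Rle_dec (INR n) y then f n else 0)
         (seq 1 (Z.to_nat (up y)))).

Definition deligne_bound (kappa : nat) (a : nat -> R) : Prop :=
  exists C : R, 0 < C /\ forall n : nat, (1 <= n)%nat ->
    Rabs (a n) <= C * Rpower (INR n) ((INR kappa - 1) / 2) * INR (ndiv n).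

Definition ycut (T : R) : R := Rpower T (3 / 4).

(* g(n,m,k,l) for n,m,k,l <= y (only used inside the sum over n,m,k,l <= y) *)
Definition gcoef (kappa : nat) (a : nat -> R) (n m k l : nat) : R :=
  a n * a m * a k * a l / Rpower (INR (n * m * k * l)) (INR kappa / 2 + 1 / 4).

Definition S4 (kappa : nat) (a : nat -> R) (T : R) (x : R) : R :=
  / 8 * sum_le (ycut T) (fun n => sum_le (ycut T) (fun m =>
          sum_le (ycut T) (fun k => sum_le (ycut T) (fun l =>
            gcoef kappa a n m k l * x ^ (2 * kappa - 1) *
            cos (4 * PI * (sqrt (INR n) + sqrt (INR m) + sqrt (INR k) + sqrt (INR l))
                 * sqrt x - PI))))).

(* Main.v *)
Require Import Defs.
From Stdlib Require Import Reals.
From Stdlib Require Import Lra Lia ZArith Arith List.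
From Coquelicot Require Import Coquelicot.
Open Scope R_scope.

Definition lsum (l : list nat) (f : nat -> R) : R := fold_right Rplus 0 (map f l).

Lemma lsum_nil f : lsum nil f = 0. Proof. reflexivity. Qed.
Lemma lsum_cons n l f : lsum (n :: l) f = f n + lsum l f. Proof. reflexivity. Qed.
Lemma lsum_app l1 l2 f : lsum (l1 ++ l2) f = lsum l1 f + lsum l2 f.
Proof. induction l1; simpl; rewrite ?lsum_nil; unfold lsum in *; simpl; try rewrite IHl1; lra. Qed.
Lemma lsum_plus l f g : lsum l (fun n => f n + g n) = lsum l f + lsum l g.
Proof. induction l; rewrite ?lsum_nil, ?lsum_cons; [lra|rewrite IHl; lra]. Qed.
Lemma lsum_scal l c f : lsum l (fun n => c * f n) = c * lsum l f.
Proof. induction l; rewrite ?lsum_nil, ?lsum_cons; [lra|rewrite IHl; lra]. Qed.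
Lemma lsum_scal_r l c f : lsum l (fun n => f n * c) = lsum l f * c.
Proof. induction l; rewrite ?lsum_nil, ?lsum_cons; [lra|rewrite IHl; lra]. Qed.
Lemma lsum_ext l f g : (forall n, In n l -> f n = g n) -> lsum l f = lsum l g.
Proof. induction l; intros H; rewrite ?lsum_nil, ?lsum_cons; auto.
  rewrite H, IHl; [reflexivity| intros; apply H; simpl; auto | simpl; auto]. Qed.
Lemma lsum_le l f g : (forall n, In n l -> f n <= g n) -> lsum l f <= lsum l g.
Proof. induction l; intros H; rewrite ?lsum_nil, ?lsum_cons; [lra|].
  assert (f a <= g a) by (apply H; simpl; auto).
  assert (lsum l f <= lsum l g) by (apply IHl; intros; apply H; simpl; auto). lra. Qed.
Lemma lsum_swap l1 l2 F :
  lsum l1 (fun i => lsum l2 (fun j => F i j)) = lsum l2 (fun j => lsum l1 (fun i => F i j)).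
Proof. induction l1.
  - rewrite lsum_nil. induction l2; rewrite ?lsum_nil, ?lsum_cons; auto. rewrite <- IHl2, lsum_nil; lra.
  - rewrite lsum_cons, IHl1. rewrite <- lsum_plus. apply lsum_ext; intros; rewrite lsum_cons; lra. Qed.

Definition ylist (y : R) := seq 1 (Z.to_nat (up y)).
Lemma sum_le_eq y f : sum_le y f = lsum (ylist y) (fun n => if Rle_dec (INR n) y then f n else 0).
Proof. reflexivity. Qed.
Lemma ylist_ge1 y n : In n (ylist y) -> (1 <= n)%nat.
Proof. unfold ylist; intros H; apply in_seq in H; lia. Qed.

Lemma sum_le_mono y f g : (forall n, (1 <= n)%nat -> INR n <= y -> f n <= g n) ->
  sum_le y f <= sum_le y g.
Proof. intros H; rewrite !sum_le_eq; apply lsum_le; intros n Hn.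
  destruct (Rle_dec (INR n) y); [apply H; auto; eapply ylist_ge1; eauto| lra]. Qed.
Lemma sum_le_scal_r y f c : sum_le y (fun n => f n * c) = sum_le y f * c.
Proof. rewrite !sum_le_eq, <- lsum_scal_r; apply lsum_ext; intros.
  destruct (Rle_dec (INR n) y); lra. Qed.
Lemma sum_le_nonneg y f : (forall n, (1 <= n)%nat -> INR n <= y -> 0 <= f n) -> 0 <= sum_le y f.
Proof. intros H. replace 0 with (sum_le y (fun _ => 0)).
  apply sum_le_mono; auto. rewrite sum_le_eq. unfold lsum. induction (ylist y); simpl; auto.
  destruct (Rle_dec _ _); lra. Qed.

Lemma RInt_lsum l a b (F : nat -> R -> R) (B : nat -> R) :
  (forall n, In n l -> ex_RInt (F n) a b /\ Rabs (RInt (F n) a b) <= B n) ->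
  ex_RInt (fun x => lsum l (fun n => F n x)) a b /\
  Rabs (RInt (fun x => lsum l (fun n => F n x)) a b) <= lsum l B.
Proof.
  induction l; intros H.
  - split. apply ex_RInt_ext with (fun _ => 0). intros; reflexivity. apply ex_RInt_const.
    rewrite lsum_nil. rewrite (RInt_ext _ (fun _ => 0)) by (intros; reflexivity).
    rewrite RInt_const. unfold scal; simpl; unfold mult; simpl. rewrite Rmult_0_r, Rabs_R0; lra.
  - destruct (H a0) as [H1 H2]; [simpl; auto|].
    destruct IHl as [H3 H4]; [intros; apply H; simpl; auto|].
    split.
    + apply ex_RInt_ext with (fun x => plus (F a0 x) (lsum l (fun n => F n x))).
      intros; reflexivity. apply (@ex_RInt_plus R_NormedModule); auto.
    + rewrite (RInt_ext _ (fun x => plus (F a0 x) (lsum l (fun n => F n x)))) by (intros; reflexivity).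
      rewrite (@RInt_plus R_CompleteNormedModule) by auto. rewrite lsum_cons. unfold plus; simpl.
      eapply Rle_trans; [apply Rabs_triang|]. lra.
Qed.

Lemma RInt_sum_le y a b (F : nat -> R -> R) (B : nat -> R) :
  (forall n, (1 <= n)%nat -> INR n <= y -> ex_RInt (F n) a b /\ Rabs (RInt (F n) a b) <= B n) ->
  ex_RInt (fun x => sum_le y (fun n => F n x)) a b /\
  Rabs (RInt (fun x => sum_le y (fun n => F n x)) a b) <= sum_le y B.
Proof.
  intros H. rewrite sum_le_eq.
  apply (RInt_lsum (ylist y) a b (fun n x => if Rle_dec (INR n) y then F n x else 0)).
  intros n Hn. destruct (Rle_dec (INR n) y).
  - apply H; auto. eapply ylist_ge1; eauto.
  - split. apply ex_RInt_const.
    rewrite RInt_const. unfold scal; simpl; unfold mult; simpl. rewrite Rmult_0_r, Rabs_R0; lra.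
Qed.

Definition Gf (N : nat) (c : R) x := 2 / c * (x ^ N * sqrt x * sin (c * sqrt x - PI)).
Definition ff (N : nat) (c : R) x := x ^ N * cos (c * sqrt x - PI).
Definition hf (N : nat) (c : R) x := (2 * INR N + 1) / c * (x ^ (N - 1) * sqrt x * sin (c * sqrt x - PI)).

Lemma Gf_deriv N c x : (1 <= N)%nat -> 0 < c -> 0 < x -> is_derive (Gf N c) x (ff N c x + hf N c x).
Proof.
  intros HN Hc Hx. unfold Gf. auto_derive.
  - auto.
  - unfold ff, hf. destruct N as [|n]; [lia|].
    replace (S n - 1)%nat with n by lia. simpl pred. rewrite S_INR.
    assert (Hs : 0 < sqrt x) by (apply sqrt_lt_R0; auto).
    assert (Hxx : sqrt x * sqrt x = x) by (apply sqrt_sqrt; lra).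
    simpl pow. unfold Rminus.
    set (s := sqrt x) in *. set (p := x ^ n). set (co := cos (c * s + - PI)). set (si := sin (c * s + - PI)).
    rewrite <- Hxx. field. split; lra.
Qed.

Lemma abs_sin_le x : Rabs (sin x) <= 1.
Proof. apply Rabs_le. apply SIN_bound. Qed.

Lemma osc_bound N c T : (1 <= N)%nat -> 0 < c -> 0 < T ->
  ex_RInt (ff N c) T (2 * T) /\
  Rabs (RInt (ff N c) T (2 * T)) <= 4 * (INR N + 2) * 2 ^ N * (T ^ N * sqrt T) / c.
Proof.
  intros HN Hc HT.
  assert (Hmin : Rmin T (2*T) = T) by (apply Rmin_left; lra).
  assert (Hmax : Rmax T (2*T) = 2*T) by (apply Rmax_right; lra).
  assert (Cf : forall z, 0 < z -> continuous (ff N c) z).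
  { intros z Hz. apply (@ex_derive_continuous R_AbsRing R_NormedModule). unfold ff. auto_derive. auto. }
  assert (Ch : forall z, 0 < z -> continuous (hf N c) z).
  { intros z Hz. apply (@ex_derive_continuous R_AbsRing R_NormedModule). unfold hf. auto_derive. auto. }
  assert (Efh : ex_RInt (ff N c) T (2*T)).
  { apply (@ex_RInt_continuous R_CompleteNormedModule); intros z Hz; apply Cf; rewrite Hmin in Hz; lra. }
  assert (Eh : ex_RInt (hf N c) T (2*T)).
  { apply (@ex_RInt_continuous R_CompleteNormedModule); intros z Hz; apply Ch; rewrite Hmin in Hz; lra. }
  assert (IG : is_RInt (fun x => ff N c x + hf N c x) T (2*T) (Gf N c (2*T) - Gf N c T)).
  { apply (is_RInt_derive (Gf N c) (fun x => ff N c x + hf N c x)).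
    - intros x Hx. rewrite Hmin in Hx. apply Gf_deriv; auto; lra.
    - intros x Hx. rewrite Hmin in Hx.
      apply (@continuous_plus R_UniformSpace R_AbsRing R_NormedModule (ff N c) (hf N c)); [apply Cf|apply Ch]; lra. }
  assert (EQ : RInt (ff N c) T (2*T) = (Gf N c (2*T) - Gf N c T) - RInt (hf N c) T (2*T)).
  { rewrite <- (is_RInt_unique _ _ _ _ IG).
    rewrite <- (@RInt_minus R_CompleteNormedModule); [| eexists; exact IG | exact Eh].
    apply RInt_ext. intros; unfold minus, plus, opp; simpl; ring. }
  split; auto. rewrite EQ.
  destruct N as [|n]; [lia|]. replace (S n - 1)%nat with n in * by lia.
  assert (Hs : 0 < sqrt T) by (apply sqrt_lt_R0; auto).
  assert (Hr2 : sqrt 2 <= 2).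
  { rewrite <- (sqrt_square 2) at 2 by lra. apply sqrt_le_1_alt; lra. }
  assert (Hr2p : 0 < sqrt 2) by (apply sqrt_lt_R0; lra).
  assert (Hs2 : sqrt (2 * T) = sqrt 2 * sqrt T) by (apply sqrt_mult; lra).
  assert (Hq : 1 <= 2 ^ n) by (apply pow_R1_Rle; lra).
  assert (HA : 0 < T ^ n) by (apply pow_lt; auto).
  assert (Bh : Rabs (RInt (hf (S n) c) T (2*T)) <= T * ((2 * INR (S n) + 1) / c * (2 ^ n * T ^ n * (sqrt 2 * sqrt T)))).
  { match goal with |- _ <= T * ?X => replace (T * X) with ((2*T - T) * X) by ring end.
    apply abs_RInt_le_const; [lra|auto|]. intros t Ht. unfold hf.
    replace (S n - 1)%nat with n by lia.
    rewrite Rabs_mult, !Rabs_mult. rewrite (Rabs_pos_eq ((2 * INR (S n) + 1) / c)).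
    2:{ apply Rdiv_le_0_compat; [|lra]. pose proof (pos_INR (S n)); lra. }
    apply Rmult_le_compat_l. { apply Rdiv_le_0_compat; [|lra]. pose proof (pos_INR (S n)); lra. }
    pose proof (abs_sin_le (c * sqrt t - PI)).
    rewrite Rabs_pos_eq by (apply pow_le; lra). rewrite Rabs_pos_eq by apply sqrt_pos.
    assert (t ^ n <= 2 ^ n * T ^ n) by (rewrite <- Rpow_mult_distr; apply pow_incr; lra).
    assert (sqrt t <= sqrt 2 * sqrt T) by (rewrite <- Hs2; apply sqrt_le_1_alt; lra).
    assert (0 <= t ^ n) by (apply pow_le; lra). pose proof (sqrt_pos t).
    pose proof (Rabs_pos (sin (c * sqrt t - PI))).
    apply Rle_trans with (t ^ n * sqrt t * 1). apply Rmult_le_compat_l; [nra|auto].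
    rewrite Rmult_1_r. apply Rmult_le_compat; auto. }
  assert (BG : forall x, 0 < x -> Rabs (Gf (S n) c x) <= 2 / c * (x ^ (S n) * sqrt x)).
  { intros x Hx. unfold Gf. rewrite Rabs_mult, Rabs_mult, Rabs_mult.
    rewrite (Rabs_pos_eq (2/c)) by (apply Rdiv_le_0_compat; lra).
    apply Rmult_le_compat_l; [apply Rdiv_le_0_compat; lra|].
    rewrite Rabs_pos_eq by (apply pow_le; lra). rewrite Rabs_pos_eq by apply sqrt_pos.
    pose proof (abs_sin_le (c * sqrt x - PI)). pose proof (sqrt_pos x).
    assert (0 <= x ^ S n) by (apply pow_le; lra).
    pose proof (Rabs_pos (sin (c * sqrt x - PI))).
    apply Rle_trans with (x ^ S n * sqrt x * 1). apply Rmult_le_compat_l; [nra|auto]. lra. }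
  pose proof (BG (2*T) ltac:(lra)) as B1. pose proof (BG T HT) as B2.
  rewrite Hs2 in B1. rewrite Rpow_mult_distr in B1. simpl pow in B1 |- *.
  rewrite S_INR in *.
  set (q := 2 ^ n) in *. set (A := T ^ n) in *. set (s := sqrt T) in *. set (r := sqrt 2) in *.
  pose proof (pos_INR n).
  assert (E : Rabs (Gf (S n) c (2 * T) - Gf (S n) c T - RInt (hf (S n) c) T (2 * T)) <=
    (T * A * s / c) * (4 * q * r + 2 + (2 * (INR n + 1) + 1) * q * r)).
  { eapply Rle_trans. apply Rabs_triang. rewrite Rabs_Ropp.
    eapply Rle_trans. apply Rplus_le_compat_r. apply Rabs_triang.
    eapply Rle_trans. apply Rplus_le_compat. apply Rplus_le_compat. exact B1. rewrite Rabs_Ropp. exact B2. exact Bh.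
    right. unfold A. simpl. field. lra. }
  eapply Rle_trans. exact E.
  replace (4 * (INR n + 1 + 2) * (2 * q) * (T * A * s) / c) with ((T * A * s / c) * (8 * (INR n + 3) * q)) by (field; lra).
  apply Rmult_le_compat_l. { apply Rdiv_le_0_compat; [|lra]. apply Rmult_le_pos; [|lra]. nra. }
  assert (q * r <= 2 * q) by nra. assert (INR n * (q * r) <= INR n * (2 * q)) by (apply Rmult_le_compat_l; lra).
  nra.
Qed.

Lemma ln_le_sub1 z : 0 < z -> ln z <= z - 1.
Proof. intros Hz. pose proof (exp_ineq1_le (ln z)). rewrite exp_ln in H; lra. Qed.

Lemma key_tel d x : 0 < d -> 1 <= x ->
  Rpower (x + 1) (- (1 + d)) <= (Rpower x (- d) - Rpower (x + 1) (- d)) / d.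
Proof.
  intros Hd Hx. unfold Rpower.
  set (u := ln (x + 1) - ln x).
  assert (Hu : / (x + 1) <= u).
  { unfold u. assert (ln (x / (x+1)) <= x/(x+1) - 1) by (apply ln_le_sub1; apply Rdiv_lt_0_compat; lra).
    unfold Rdiv in H. rewrite ln_mult, ln_Rinv in H by (try apply Rinv_0_lt_compat; lra).
    replace (x * / (x+1) - 1) with (- / (x+1)) in H by (field; lra). lra. }
  assert (E1 : exp (- d * ln x) = exp (- d * ln (x+1)) * exp (d * u)).
  { rewrite <- exp_plus. f_equal. unfold u. ring. }
  assert (E2 : exp (- (1 + d) * ln (x + 1)) = exp (- d * ln (x+1)) * / (x + 1)).
  { replace (- (1 + d) * ln (x + 1)) with (- d * ln (x+1) + ln (/ (x+1))).
    rewrite exp_plus, exp_ln; auto. apply Rinv_0_lt_compat; lra.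
    rewrite ln_Rinv by lra. ring. }
  rewrite E1, E2. set (P := exp (- d * ln (x + 1))).
  assert (HP : 0 < P) by apply exp_pos.
  pose proof (exp_ineq1_le (d * u)).
  apply Rmult_le_reg_l with d; auto.
  replace (d * ((P * exp (d * u) - P) / d)) with (P * (exp (d * u) - 1)) by (field; lra).
  assert (d * / (x+1) <= d * u) by (apply Rmult_le_compat_l; lra).
  replace (d * (P * / (x + 1))) with (P * (d * / (x+1))) by ring.
  apply Rmult_le_compat_l; lra.
Qed.

Lemma Rpower_base1 z : Rpower 1 z = 1.
Proof. unfold Rpower. rewrite ln_1, Rmult_0_r, exp_0. reflexivity. Qed.

Lemma zeta_partial d N : 0 < d -> (1 <= N)%nat ->
  lsum (seq 1 N) (fun j => Rpower (INR j) (- (1 + d))) <= 1 + (1 - Rpower (INR N) (- d)) / d.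
Proof.
  intros Hd HN. induction N as [|N IH]; [lia|].
  destruct (Nat.eq_dec N 0) as [->|HN0].
  - simpl. rewrite lsum_cons, lsum_nil. rewrite !Rpower_base1.
    replace ((1 - 1) / d) with 0 by (field; lra). lra.
  - rewrite seq_S, lsum_app, lsum_cons, lsum_nil.
    assert (IH' := IH ltac:(lia)).
    replace (INR (1 + N)) with (INR N + 1) by (rewrite plus_INR; simpl; lra).
    rewrite S_INR.
    assert (1 <= INR N) by (apply (le_INR 1); lia).
    pose proof (key_tel d (INR N) Hd H).
    replace (1 + (1 - Rpower (INR N + 1) (- d)) / d) with
      (1 + (1 - Rpower (INR N) (- d)) / d + (Rpower (INR N) (- d) - Rpower (INR N + 1) (- d)) / d)
      by (field; lra). lra.
Qed.

Lemma zeta_bound d N : 0 < d ->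
  lsum (seq 1 N) (fun j => Rpower (INR j) (- (1 + d))) <= 1 + / d.
Proof.
  intros Hd. destruct N as [|N]. { rewrite lsum_nil. assert (0 < /d) by (apply Rinv_0_lt_compat; lra). lra. }
  eapply Rle_trans. apply zeta_partial; auto; lia.
  assert (0 < Rpower (INR (S N)) (- d)) by (unfold Rpower; apply exp_pos).
  unfold Rdiv. assert (0 < /d) by (apply Rinv_0_lt_compat; lra). nra.
Qed.

Lemma Rpower_INR_mult k m z : (1 <= k)%nat -> (1 <= m)%nat ->
  Rpower (INR (k * m)) z = Rpower (INR k) z * Rpower (INR m) z.
Proof. intros Hk Hm. rewrite mult_INR. rewrite Rpower_mult_distr; auto.
  apply (lt_INR 0); lia. apply (lt_INR 0); lia. Qed.

Lemma mult_sum k s M : (1 <= k)%nat ->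
  lsum (seq 1 M) (fun n => if Nat.eqb (n mod k) 0 then Rpower (INR n) (- s) else 0)
  = Rpower (INR k) (- s) * lsum (seq 1 (M / k)) (fun j => Rpower (INR j) (- s)).
Proof.
  intros Hk. induction M as [|M IH].
  - rewrite Nat.Div0.div_0_l by lia. rewrite !lsum_nil. ring.
  - rewrite seq_S, lsum_app, lsum_cons, lsum_nil, IH.
    pose proof (Nat.div_mod_eq M k) as HM. pose proof (Nat.mod_upper_bound M k ltac:(lia)) as Hr.
    set (q := (M / k)%nat) in *. set (r := (M mod k)%nat) in *.
    destruct (Nat.eq_dec (S r) k) as [Hrk|Hrk].
    + assert (E1 : (1 + M) mod k = 0%nat) by (symmetry; apply Nat.mod_unique with (S q); lia).
      assert (E2 : ((S M) / k)%nat = S q) by (symmetry; apply Nat.div_unique with 0%nat; lia).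
      rewrite E1, E2. simpl Nat.eqb. rewrite seq_S, lsum_app, lsum_cons, lsum_nil.
      replace (1 + M)%nat with (k * (1 + q))%nat by lia.
      rewrite Rpower_INR_mult by lia. ring.
    + assert (E1 : (1 + M) mod k = S r) by (symmetry; apply Nat.mod_unique with q; lia).
      assert (E2 : ((S M) / k)%nat = q) by (symmetry; apply Nat.div_unique with (S r); lia).
      rewrite E1, E2. simpl Nat.eqb. cbv iota. ring.
Qed.

Lemma length_filter_lsum (p : nat -> bool) l :
  INR (length (filter p l)) = lsum l (fun k => if p k then 1 else 0).
Proof. induction l; simpl. reflexivity. rewrite lsum_cons. destruct (p a); simpl length.
  rewrite S_INR, IHl; ring. rewrite IHl; ring. Qed.

Lemma ndiv_lsum n M : (1 <= n)%nat -> (n <= M)%nat ->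
  INR (ndiv n) = lsum (seq 1 M) (fun k => if Nat.eqb (n mod k) 0 then 1 else 0).
Proof.
  intros H1 H2. unfold ndiv. rewrite length_filter_lsum.
  replace M with (n + (M - n))%nat by lia. rewrite seq_app, lsum_app.
  rewrite (lsum_ext (seq (1 + n) (M - n)) _ (fun _ => 0)).
  - assert (lsum (seq (1 + n) (M - n)) (fun _ => 0) = 0) as ->.
    { induction (seq (1+n) (M-n)); [reflexivity| rewrite lsum_cons, IHl; ring]. }
    ring.
  - intros k Hk. apply in_seq in Hk. rewrite Nat.mod_small by lia.
    destruct n; [lia|reflexivity].
Qed.

Lemma div_sum d M : 0 < d ->
  lsum (seq 1 M) (fun n => INR (ndiv n) * Rpower (INR n) (- (1 + d))) <= (1 + / d) * (1 + / d).
Proof.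
  intros Hd.
  rewrite (lsum_ext _ _ (fun n => lsum (seq 1 M) (fun k => if Nat.eqb (n mod k) 0 then Rpower (INR n) (- (1 + d)) else 0))).
  2:{ intros n Hn. apply in_seq in Hn. rewrite (ndiv_lsum n M) by lia.
      rewrite <- lsum_scal_r. apply lsum_ext. intros k _. destruct (_ =? _); ring. }
  rewrite lsum_swap.
  rewrite (lsum_ext _ _ (fun k => Rpower (INR k) (- (1 + d)) * lsum (seq 1 (M / k)) (fun j => Rpower (INR j) (- (1 + d))))).
  2:{ intros k Hk. apply in_seq in Hk. apply mult_sum; lia. }
  eapply Rle_trans.
  apply lsum_le with (g := fun k => Rpower (INR k) (- (1 + d)) * (1 + / d)).
  { intros k _. apply Rmult_le_compat_l. unfold Rpower; left; apply exp_pos. apply zeta_bound; auto. }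
  rewrite lsum_scal_r. apply Rmult_le_compat_r.
  assert (0 < /d) by (apply Rinv_0_lt_compat; lra). lra.
  apply zeta_bound; auto.
Qed.

Lemma Rpower_pos x z : 0 < Rpower x z.
Proof. unfold Rpower; apply exp_pos. Qed.

Lemma D_bound d y : 0 < d -> 0 < y ->
  sum_le y (fun n => INR (ndiv n) * Rpower (INR n) (- (7 / 8))) <=
  Rpower y (1 / 8 + d) * ((1 + / d) * (1 + / d)).
Proof.
  intros Hd Hy. rewrite sum_le_eq.
  eapply Rle_trans.
  apply lsum_le with (g := fun n => Rpower y (1 / 8 + d) * (INR (ndiv n) * Rpower (INR n) (- (1 + d)))).
  - intros n Hn. apply ylist_ge1 in Hn.
    assert (Hn' : 1 <= INR n) by (apply (le_INR 1); lia).
    pose proof (pos_INR (ndiv n)).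
    destruct (Rle_dec (INR n) y).
    + replace (Rpower (INR n) (- (7 / 8))) with (Rpower (INR n) (1/8 + d) * Rpower (INR n) (- (1 + d))).
      2:{ rewrite <- Rpower_plus. f_equal. field. }
      assert (Rpower (INR n) (1 / 8 + d) <= Rpower y (1 / 8 + d)) by (apply Rle_Rpower_l; lra).
      pose proof (Rpower_pos (INR n) (- (1 + d))).
      assert (0 <= INR (ndiv n) * Rpower (INR n) (- (1 + d))) by (apply Rmult_le_pos; lra).
      replace (INR (ndiv n) * (Rpower (INR n) (1 / 8 + d) * Rpower (INR n) (- (1 + d))))
        with (Rpower (INR n) (1 / 8 + d) * (INR (ndiv n) * Rpower (INR n) (- (1 + d)))) by ring.
      apply Rmult_le_compat_r; auto.
    + pose proof (Rpower_pos (INR n) (- (1 + d))). pose proof (Rpower_pos y (1/8 + d)).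
      apply Rmult_le_pos; [lra|]. apply Rmult_le_pos; lra.
  - rewrite lsum_scal. apply Rmult_le_compat_l. left; apply Rpower_pos. apply div_sum; auto.
Qed.

Lemma rp8 x s : 1 <= x -> sqrt x <= s -> Rpower x (1/8) <= Rpower s (1/4).
Proof.
  intros Hx Hs. assert (0 < sqrt x) by (apply sqrt_lt_R0; lra).
  replace (Rpower x (1/8)) with (Rpower (sqrt x) (1/4)).
  apply Rle_Rpower_l; lra.
  rewrite <- Rpower_sqrt by lra. rewrite Rpower_mult. f_equal. field.
Qed.

Lemma inv_s_bound (n m k l : nat) : (1 <= n)%nat -> (1 <= m)%nat -> (1 <= k)%nat -> (1 <= l)%nat ->
  / (sqrt (INR n) + sqrt (INR m) + sqrt (INR k) + sqrt (INR l)) <=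
  Rpower (INR n) (- (1/8)) * Rpower (INR m) (- (1/8)) * Rpower (INR k) (- (1/8)) * Rpower (INR l) (- (1/8)).
Proof.
  intros Hn Hm Hk Hl.
  assert (In' : 1 <= INR n) by (apply (le_INR 1); lia).
  assert (Im' : 1 <= INR m) by (apply (le_INR 1); lia).
  assert (Ik' : 1 <= INR k) by (apply (le_INR 1); lia).
  assert (Il' : 1 <= INR l) by (apply (le_INR 1); lia).
  pose proof (sqrt_pos (INR n)). pose proof (sqrt_pos (INR m)).
  pose proof (sqrt_pos (INR k)). pose proof (sqrt_pos (INR l)).
  assert (0 < sqrt (INR n)) by (apply sqrt_lt_R0; lra).
  set (s := sqrt (INR n) + sqrt (INR m) + sqrt (INR k) + sqrt (INR l)).
  assert (Hs : 0 < s) by (unfold s; lra).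
  rewrite !Rpower_Ropp. rewrite <- !Rinv_mult.
  apply Rinv_le_contravar.
  { repeat apply Rmult_lt_0_compat; apply Rpower_pos. }
  assert (E : s = Rpower s (1/4) * Rpower s (1/4) * Rpower s (1/4) * Rpower s (1/4)).
  { rewrite <- !Rpower_plus. replace (1/4+1/4+1/4+1/4) with 1 by field. rewrite Rpower_1; auto. }
  rewrite E.
  pose proof (Rpower_pos (INR n) (1/8)). pose proof (Rpower_pos (INR m) (1/8)).
  pose proof (Rpower_pos (INR k) (1/8)). pose proof (Rpower_pos (INR l) (1/8)).
  repeat apply Rmult_le_compat; try (left; apply Rpower_pos);
    try (repeat apply Rmult_le_pos; left; apply Rpower_pos);
    apply rp8; auto; unfold s; lra.
Qed.

Definition vv (kappa : nat) (a : nat -> R) (n : nat) :=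
  Rabs (a n) / Rpower (INR n) (INR kappa / 2 + 1 / 4) * Rpower (INR n) (- (1/8)).

Lemma vv_bound kappa a C n : (1 <= n)%nat ->
  Rabs (a n) <= C * Rpower (INR n) ((INR kappa - 1) / 2) * INR (ndiv n) ->
  vv kappa a n <= C * (INR (ndiv n) * Rpower (INR n) (- (7/8))).
Proof.
  intros Hn Ha. unfold vv, Rdiv at 1. rewrite <- Rpower_Ropp.
  apply Rle_trans with (C * Rpower (INR n) ((INR kappa - 1) / 2) * INR (ndiv n) *
     Rpower (INR n) (- (INR kappa / 2 + 1 / 4)) * Rpower (INR n) (- (1 / 8))).
  { apply Rmult_le_compat_r; [left; apply Rpower_pos|].
    apply Rmult_le_compat_r; [left; apply Rpower_pos|]. auto. }
  right. replace (Rpower (INR n) (- (7 / 8))) with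
    (Rpower (INR n) ((INR kappa - 1) / 2) * Rpower (INR n) (- (INR kappa / 2 + 1 / 4)) * Rpower (INR n) (- (1 / 8))).
  ring. rewrite <- !Rpower_plus. f_equal. field.
Qed.

Lemma vv_nonneg kappa a n : 0 <= vv kappa a n.
Proof. unfold vv. apply Rmult_le_pos; [|left; apply Rpower_pos].
  apply Rdiv_le_0_compat; [apply Rabs_pos| apply Rpower_pos]. Qed.

Lemma g_bound kappa a (n m k l : nat) : (1 <= n)%nat -> (1 <= m)%nat -> (1 <= k)%nat -> (1 <= l)%nat ->
  Rabs (gcoef kappa a n m k l) * / (sqrt (INR n) + sqrt (INR m) + sqrt (INR k) + sqrt (INR l)) <=
  vv kappa a n * vv kappa a m * vv kappa a k * vv kappa a l.
Proof.
  intros Hn Hm Hk Hl. unfold gcoef, vv.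
  set (e := INR kappa / 2 + 1 / 4).
  rewrite (Rpower_INR_mult (n * m * k) l) by lia.
  rewrite (Rpower_INR_mult (n * m) k) by lia.
  rewrite (Rpower_INR_mult n m) by lia.
  pose proof (Rpower_pos (INR n) e). pose proof (Rpower_pos (INR m) e).
  pose proof (Rpower_pos (INR k) e). pose proof (Rpower_pos (INR l) e).
  unfold Rdiv. rewrite Rabs_mult, (Rabs_pos_eq (/ _)).
  2:{ left; apply Rinv_0_lt_compat; repeat apply Rmult_lt_0_compat; auto. }
  rewrite !Rabs_mult.
  pose proof (inv_s_bound n m k l Hn Hm Hk Hl).
  set (P := Rabs (a n) * Rabs (a m) * Rabs (a k) * Rabs (a l) *
     / (Rpower (INR n) e * Rpower (INR m) e * Rpower (INR k) e * Rpower (INR l) e)).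
  assert (HP : 0 <= P).
  { unfold P. apply Rmult_le_pos. repeat apply Rmult_le_pos; apply Rabs_pos.
    left; apply Rinv_0_lt_compat; repeat apply Rmult_lt_0_compat; auto. }
  eapply Rle_trans. apply Rmult_le_compat_l; [exact HP| exact H3].
  right. unfold P. change (1 * / 8) with (1/8). field. repeat split; lra.
Qed.

Definition KK (kappa : nat) (T : R) :=
  4 * (INR (2 * kappa - 1) + 2) * 2 ^ (2 * kappa - 1) * (T ^ (2 * kappa - 1) * sqrt T).

Lemma KK_nonneg kappa T : 0 < T -> 0 <= KK kappa T.
Proof. intros HT. unfold KK. pose proof (pos_INR (2 * kappa - 1)).
  pose proof (sqrt_pos T). assert (0 <= 2 ^ (2 * kappa - 1)) by (apply pow_le; lra).
  assert (0 <= T ^ (2 * kappa - 1)) by (apply pow_le; lra).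
  repeat apply Rmult_le_pos; lra. Qed.

Lemma term_int kappa a (n m k l : nat) T : (1 <= n)%nat -> (1 <= m)%nat -> (1 <= k)%nat -> (1 <= l)%nat ->
  (12 <= kappa)%nat -> 0 < T ->
  ex_RInt (fun x => gcoef kappa a n m k l * x ^ (2 * kappa - 1) *
     cos (4 * PI * (sqrt (INR n) + sqrt (INR m) + sqrt (INR k) + sqrt (INR l)) * sqrt x - PI)) T (2*T) /\
  Rabs (RInt (fun x => gcoef kappa a n m k l * x ^ (2 * kappa - 1) *
     cos (4 * PI * (sqrt (INR n) + sqrt (INR m) + sqrt (INR k) + sqrt (INR l)) * sqrt x - PI)) T (2*T))
  <= KK kappa T * (vv kappa a n * vv kappa a m * vv kappa a k * vv kappa a l).
Proof.
  intros Hn Hm Hk Hl Hkap HT.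
  set (s := sqrt (INR n) + sqrt (INR m) + sqrt (INR k) + sqrt (INR l)).
  assert (Hs : 0 < s).
  { unfold s. assert (0 < sqrt (INR n)) by (apply sqrt_lt_R0; apply (lt_INR 0); lia).
    pose proof (sqrt_pos (INR m)). pose proof (sqrt_pos (INR k)). pose proof (sqrt_pos (INR l)). lra. }
  pose proof PI2_3_2.
  assert (Hc : 0 < 4 * PI * s) by (apply Rmult_lt_0_compat; lra).
  destruct (osc_bound (2 * kappa - 1) (4 * PI * s) T ltac:(lia) Hc HT) as [E B].
  set (g := gcoef kappa a n m k l).
  assert (EQ : forall x, g * x ^ (2 * kappa - 1) * cos (4 * PI * s * sqrt x - PI) = scal g (ff (2 * kappa - 1) (4 * PI * s) x)).
  { intros x. unfold ff, scal; simpl; unfold mult; simpl. ring. }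
  split.
  - apply (ex_RInt_ext (fun x => scal g (ff (2 * kappa - 1) (4 * PI * s) x))).
    intros; rewrite EQ; auto. apply (@ex_RInt_scal R_NormedModule); auto.
  - rewrite (RInt_ext _ (fun x => scal g (ff (2 * kappa - 1) (4 * PI * s) x))) by (intros; apply EQ).
    rewrite (@RInt_scal R_CompleteNormedModule) by auto. unfold scal; simpl; unfold mult; simpl.
    rewrite Rabs_mult.
    pose proof (g_bound kappa a n m k l Hn Hm Hk Hl) as Hg. fold s g in Hg.
    fold (KK kappa T) in B.
    apply Rle_trans with (Rabs g * (KK kappa T / (4 * PI * s))).
    apply Rmult_le_compat_l; [apply Rabs_pos| exact B].
    assert (KK kappa T / (4 * PI * s) <= KK kappa T * / s).
    { unfold Rdiv. apply Rmult_le_compat_l. apply KK_nonneg; auto.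
      apply Rinv_le_contravar; auto. nra. }
    pose proof (KK_nonneg kappa T HT).
    apply Rle_trans with (Rabs g * (KK kappa T * / s)).
    apply Rmult_le_compat_l; [apply Rabs_pos|auto].
    replace (Rabs g * (KK kappa T * / s)) with (KK kappa T * (Rabs g * / s)) by ring.
    apply Rmult_le_compat_l; auto.
Qed.

Lemma sum_le_ext y f g : (forall n, f n = g n) -> sum_le y f = sum_le y g.
Proof. intros H. rewrite !sum_le_eq. apply lsum_ext. intros n _. rewrite H; auto. Qed.
Lemma sum_le_scal_l y f c : sum_le y (fun n => c * f n) = c * sum_le y f.
Proof. rewrite Rmult_comm, <- sum_le_scal_r. apply sum_le_ext; intros; ring. Qed.

Lemma sum4 y X (v : nat -> R) :
  sum_le y (fun n => sum_le y (fun m => sum_le y (fun k => sum_le y (fun l => X * (v n * v m * v k * v l)))))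
  = X * (sum_le y v ^ 4).
Proof.
  set (W := sum_le y v).
  transitivity (sum_le y (fun n => sum_le y (fun m => sum_le y (fun k => X * v n * v m * v k * W)))).
  { apply sum_le_ext; intro n; apply sum_le_ext; intro m; apply sum_le_ext; intro k.
    unfold W. rewrite <- sum_le_scal_l. apply sum_le_ext; intro l; ring. }
  transitivity (sum_le y (fun n => sum_le y (fun m => X * v n * v m * W * W))).
  { apply sum_le_ext; intro n; apply sum_le_ext; intro m.
    rewrite (sum_le_scal_r y (fun k => X * v n * v m * v k) W).
    rewrite (sum_le_scal_l y v (X * v n * v m)). reflexivity. }
  transitivity (sum_le y (fun n => X * v n * W * W * W)).
  { apply sum_le_ext; intro n.
    rewrite (sum_le_scal_r y (fun m => X * v n * v m * W) W).
    rewrite (sum_le_scal_r y (fun m => X * v n * v m) W).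
    rewrite (sum_le_scal_l y v (X * v n)). reflexivity. }
  rewrite (sum_le_scal_r y (fun n => X * v n * W * W) W).
  rewrite (sum_le_scal_r y (fun n => X * v n * W) W).
  rewrite (sum_le_scal_r y (fun n => X * v n) W).
  rewrite (sum_le_scal_l y v X). fold W. simpl. ring.
Qed.

Theorem mainTheorem5 (kappa : nat) (a : nat -> R) :
  (12 <= kappa)%nat -> Nat.even kappa = true ->
  deligne_bound kappa a ->
  forall eps : R, 0 < eps ->
  exists C : R, forall T : R, 10 <= T ->
    exists pr : Riemann_integrable (S4 kappa a T) T (2 * T),
      Rabs (RiemannInt pr) <=
        C * (Rpower T (2 * INR kappa - 1 / 2 + eps) * Rpower (ycut T) (1 / 2)).
Proof.
  intros Hk _ [C [HC Hdel]] eps Heps.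
  set (d := eps / 3). assert (Hd : 0 < d) by (unfold d; lra).
  set (Z := (1 + / d) * (1 + / d)).
  set (N := (2 * kappa - 1)%nat).
  set (K0 := 4 * (INR N + 2) * 2 ^ N).
  exists (/ 8 * K0 * C ^ 4 * Z ^ 4).
  intros T HT. assert (HT0 : 0 < T) by lra.
  set (y := ycut T). assert (Hy : 0 < y) by (apply Rpower_pos).
  set (body := fun x => sum_le y (fun n => sum_le y (fun m =>
          sum_le y (fun k => sum_le y (fun l =>
            gcoef kappa a n m k l * x ^ (2 * kappa - 1) *
            cos (4 * PI * (sqrt (INR n) + sqrt (INR m) + sqrt (INR k) + sqrt (INR l))
                 * sqrt x - PI)))))).
  assert (HB : ex_RInt body T (2 * T) /\ Rabs (RInt body T (2 * T)) <=
     sum_le y (fun n => sum_le y (fun m => sum_le y (fun k => sum_le y (fun l =>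
        KK kappa T * (vv kappa a n * vv kappa a m * vv kappa a k * vv kappa a l)))))).
  { unfold body. apply RInt_sum_le. intros n Hn _.
    apply RInt_sum_le. intros m Hm _.
    apply RInt_sum_le. intros k Hk' _.
    apply RInt_sum_le. intros l Hl _.
    apply term_int; auto. }
  destruct HB as [Hex Hbd].
  assert (HS : forall x, S4 kappa a T x = scal (/ 8) (body x)) by (intros; reflexivity).
  assert (Hex4 : ex_RInt (S4 kappa a T) T (2 * T)).
  { apply (ex_RInt_ext (fun x => scal (/8) (body x))). intros; rewrite HS; auto.
    apply (@ex_RInt_scal R_NormedModule); auto. }
  exists (ex_RInt_Reals_0 _ _ _ Hex4).
  rewrite <- RInt_Reals.
  rewrite (RInt_ext _ (fun x => scal (/8) (body x))) by (intros; apply HS).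
  rewrite (@RInt_scal R_CompleteNormedModule) by auto. unfold scal; simpl; unfold mult; simpl.
  rewrite Rabs_mult, (Rabs_pos_eq (/8)) by lra.
  rewrite sum4 in Hbd.
  set (W := sum_le y (vv kappa a)) in *.
  assert (HW0 : 0 <= W) by (apply sum_le_nonneg; intros; apply vv_nonneg).
  assert (HW : W <= C * (Rpower y (1 / 8 + d) * Z)).
  { eapply Rle_trans. unfold W. apply sum_le_mono with (g := fun n => C * (INR (ndiv n) * Rpower (INR n) (- (7/8)))).
    intros n Hn _. apply vv_bound; auto.
    rewrite sum_le_scal_l. apply Rmult_le_compat_l; [lra|]. apply D_bound; auto. }
  assert (HW4 : W ^ 4 <= (C * (Rpower y (1 / 8 + d) * Z)) ^ 4) by (apply pow_incr; lra).
  pose proof (KK_nonneg kappa T HT0) as HKK.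
  apply Rle_trans with (/ 8 * (KK kappa T * (C * (Rpower y (1 / 8 + d) * Z)) ^ 4)).
  { apply Rmult_le_compat_l; [lra|]. eapply Rle_trans; [exact Hbd|]. apply Rmult_le_compat_l; auto. }
  assert (E1 : Rpower y (1 / 8 + d) ^ 4 = Rpower y (1 / 2) * Rpower T eps).
  { rewrite <- Rpower_pow by apply Rpower_pos. rewrite Rpower_mult.
    replace ((1 / 8 + d) * INR 4) with (1/2 + 4 * d) by (simpl; unfold d; field).
    rewrite Rpower_plus. f_equal. unfold y, ycut. rewrite Rpower_mult. f_equal. unfold d; field. }
  assert (E2 : Rpower T (2 * INR kappa - 1 / 2 + eps) = T ^ N * sqrt T * Rpower T eps).
  { rewrite <- Rpower_sqrt by lra. rewrite <- Rpower_pow by lra. rewrite <- !Rpower_plus.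
    f_equal. unfold N. rewrite minus_INR by lia. rewrite mult_INR. simpl. field. }
  rewrite E2. unfold KK. fold N. fold K0.
  rewrite !Rpow_mult_distr, E1. right. ring.
Qed.
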